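(* Let $\lambda\in(\frac16,\frac56)$ and $x\in[0,1]\setminus\mathcal E$. For every $n\ge0$, $I_n(x)$ is exactly the open interval of maximal length containing $x$ on which $F^\lambda_n$ is affine. In particular $$m_n(x)=\frac{F^\lambda_n(x)-F^\lambda_n(a_n(x))}{x-a_n(x)}$$ and $\mathrm{sgn}(m_n(x))=\mathrm{sgn}(\beta_{1,2}(x,n))\,\varepsilon_n(x)$.
   Context: Construction: $F^\lambda_0\equiv0$ on $[0,1]$ (one interval of generation $0$). Given $F^\lambda_n$ with its $4^n$ closed intervals of generation $n$ (covering $[0,1]$, disjoint interiors, $F^\lambda_n$ affine on each), on each interval $[a,b]$ of generation $n$, with $\ell=b-a$ and slope $m$, $F^\lambda_{n+1}$ coincides with $F^\lambda_n$ at $a,a+\ell/3,a+2\ell/3,b$, equals $F^\lambda_n(a+\ell/2)+\lambda\ell\sqrt{1+m^2}$ at $a+\ell/2$, and is affine on $[a,a+\ell/3],[a+\ell/3,a+\ell/2],[a+\ell/2,a+2\ell/3],[a+2\ell/3,b]$ (generation $n+1$). Dynamics: $T(x)=3x$ on $[0,\frac13)$, $6x-2$ on $[\frac13,\frac12)$, $4-6x$ on $[\frac12,\frac23)$, $3x-2$ on $[\frac23,1]$; $U(x)=0,1,2,3$ and $\widetilde U(x)=0,\frac13,\frac23,\frac23$ on these intervals respectively; $u_n(x)=U(T^nx)$, $\widetilde u_n(x)=\widetilde U(T^nx)$; $\beta_i(x,n)=\#\{k<n:u_k(x)=i\}$, $\beta_{i,j}=\beta_i+\beta_j$; $\varepsilon_n(x)=(-1)^{\beta_2(x,n)}$,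 $\ell_n(x)=3^{-\beta_{0,3}(x,n)}6^{-\beta_{1,2}(x,n)}$, $a_0(x)=0$, $a_n(x)=\sum_{k=0}^{n-1}\widetilde u_k(x)\varepsilon_k(x)\ell_k(x)$; $I_n(x)$ is the open interval with endpoints $a_n(x)$ and $a_n(x)+\varepsilon_n(x)\ell_n(x)$. $\mathcal E$ is the set of $x$ whose digit sequence $(u_n(x))$ is eventually constantly $0$ or eventually constantly $3$; for $x\notin\mathcal E$, $F^\lambda_n$ is differentiable at $x$ and $m_n(x)$ denotes its slope at $x$. $\mathrm{sgn}$ is the sign function ($\mathrm{sgn}(0)=0$). *)

(* Defs.v *)
From Stdlib Require Import Reals Lra List.
From Coquelicot Require Import Coquelicot.
Import ListNotations.
Open Scope R_scope.

(* F_n is encoded by its list of breakpoints (x_i, F_n(x_i)), i = 0..4^n,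
   sorted increasingly, F_n being affine between consecutive breakpoints. *)

(* the 4 new left breakpoints produced from the interval [a,b] with values fa, fb *)
Definition pieces (lam : R) (p q : R * R) : list (R * R) :=
  let a := fst p in let fa := snd p in
  let b := fst q in let fb := snd q in
  let l := b - a in
  let m := (fb - fa) / l in
  [ (a, fa);
    (a + l / 3, fa + m * (l / 3));
    (a + l / 2, (fa + m * (l / 2)) + lam * l * sqrt (1 + m ^ 2));
    (a + 2 * l / 3, fa + m * (2 * l / 3)) ].

Fixpoint refine_aux (lam : R) (p : R * R) (rest : list (R * R)) : list (R * R) :=
  match rest with
  | nil => p :: nil
  | q :: rest' => pieces lam p q ++ refine_aux lam q rest'
  end.

Definition refine (lam : R) (pts : list (R * R)) : list (R * R) :=
  match pts with
  | nil => nil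
  | p :: rest => refine_aux lam p rest
  end.

Fixpoint breakpoints (lam : R) (n : nat) : list (R * R) :=
  match n with
  | O => (0, 0) :: (1, 0) :: nil
  | S k => refine lam (breakpoints lam k)
  end.

Fixpoint interp_aux (p : R * R) (rest : list (R * R)) (x : R) : R :=
  match rest with
  | nil => snd p
  | q :: rest' =>
      if Rle_dec x (fst q)
      then snd p + (snd q - snd p) / (fst q - fst p) * (x - fst p)
      else interp_aux q rest' x
  end.

Definition interp (pts : list (R * R)) (x : R) : R :=
  match pts with
  | nil => 0
  | p :: rest => interp_aux p rest x
  end.

(* F^lambda_n (meaningful on [0,1]) *)
Definition F (lam : R) (n : nat) (x : R) : R := interp (breakpoints lam n) x.

Definition T (x : R) : R :=
  if Rlt_dec x (1/3) then 3 * x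
  else if Rlt_dec x (1/2) then 6 * x - 2
  else if Rlt_dec x (2/3) then 4 - 6 * x
  else 3 * x - 2.

Definition U (x : R) : nat :=
  if Rlt_dec x (1/3) then 0%nat
  else if Rlt_dec x (1/2) then 1%nat
  else if Rlt_dec x (2/3) then 2%nat
  else 3%nat.

Definition Ut (x : R) : R :=
  if Rlt_dec x (1/3) then 0
  else if Rlt_dec x (1/2) then 1/3
  else 2/3.

Fixpoint Titer (n : nat) (x : R) : R :=
  match n with O => x | S k => T (Titer k x) end.

Definition u (n : nat) (x : R) : nat := U (Titer n x).
Definition ut (n : nat) (x : R) : R := Ut (Titer n x).

Fixpoint beta (i : nat) (x : R) (n : nat) : nat :=
  match n with
  | O => O
  | S k => (beta i x k + (if Nat.eqb (u k x) i then 1 else 0))%nat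
  end.

Definition beta2 (i j : nat) (x : R) (n : nat) : nat := (beta i x n + beta j x n)%nat.

Definition eps (x : R) (n : nat) : R := (-1) ^ (beta 2 x n).

Definition ell (x : R) (n : nat) : R :=
  / (3 ^ (beta2 0 3 x n) * 6 ^ (beta2 1 2 x n)).

Fixpoint a (x : R) (n : nat) : R :=
  match n with
  | O => 0
  | S k => a x k + ut k x * eps x k * ell x k
  end.

Definition I_lo (x : R) (n : nat) : R := Rmin (a x n) (a x n + eps x n * ell x n).
Definition I_hi (x : R) (n : nat) : R := Rmax (a x n) (a x n + eps x n * ell x n).

Definition inE (x : R) : Prop :=
  exists N : nat,
    (forall k, (N <= k)%nat -> u k x = 0%nat) \/
    (forall k, (N <= k)%nat -> u k x = 3%nat).

Definition AffineOn (f : R -> R) (c d : R) : Prop :=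
  exists alpha beta0 : R, forall t, c < t < d -> f t = alpha * t + beta0.

Definition sgn (y : R) : R :=
  if Rlt_dec 0 y then 1 else if Rlt_dec y 0 then -1 else 0.

Definition m (lam : R) (n : nat) (x : R) : R := Derive (F lam n) x.

(* Main.v *)
Require Import Defs.
From Stdlib Require Import Reals Lra Lia List.
From Coquelicot Require Import Coquelicot.
Import ListNotations.
Open Scope R_scope.

Definition slope (p q : R * R) : R := (snd q - snd p) / (fst q - fst p).
Definition lin (p q : R * R) (t : R) : R :=
  snd p + (snd q - snd p) / (fst q - fst p) * (t - fst p).

Fixpoint incrL (l : list (R*R)) : Prop :=
  match l with
  | p :: t => match t with q :: _ => fst p < fst q | nil => True end /\ incrL t
  | nil => True
  end.

Fixpoint kinksL (l : list (R*R)) : Prop :=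
  match l with
  | p :: t => match t with q :: r :: _ => slope p q <> slope q r | _ => True end /\ kinksL t
  | nil => True
  end.

Lemma incrL_intro p q t : fst p < fst q -> incrL (q :: t) -> incrL (p :: q :: t).
Proof. intros; simpl in *; tauto. Qed.

Lemma kinksL_intro p q r t : slope p q <> slope q r -> kinksL (q :: r :: t) -> kinksL (p :: q :: r :: t).
Proof. intros; simpl in *; tauto. Qed.

Lemma incrL_app l1 l : incrL (l1 ++ l) -> incrL l.
Proof. induction l1; simpl; auto. intros [_ H]; auto. Qed.

Lemma kinksL_app l1 l : kinksL (l1 ++ l) -> kinksL l.
Proof. induction l1; simpl; auto. intros [_ H]; auto. Qed.

Lemma incrL_lt0 l2 p q l3 : incrL (p :: l2 ++ q :: l3) -> fst p < fst q.
Proof.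
  revert p; induction l2 as [|w l2 IH]; intros p; simpl.
  - tauto.
  - intros [H1 H2]. specialize (IH w H2). lra.
Qed.

Lemma incrL_lt L l1 w l2 p l3 : incrL L -> L = l1 ++ w :: l2 ++ p :: l3 -> fst w < fst p.
Proof. intros H ->. apply incrL_app in H. eapply incrL_lt0; eauto. Qed.

Lemma kinks_get l1 p q r l2 : kinksL (l1 ++ p :: q :: r :: l2) -> slope p q <> slope q r.
Proof. intros H; apply kinksL_app in H; simpl in H; tauto. Qed.

Lemma last_or_nil {A} (l : list A) : l = [] \/ exists l0 o, l = l0 ++ [o].
Proof. destruct l as [|x l]; [auto|right]. destruct (exists_last (l:=x::l)) as [l0 [o H]]; [discriminate|eauto]. Qed.

Lemma interp_aux_mid l p0 p q l2 t :
  (forall w, In w (l ++ [p]) -> fst w < t) -> t <= fst q ->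
  interp_aux p0 (l ++ p :: q :: l2) t = lin p q t.
Proof.
  revert p0; induction l as [|w l IH]; intros p0 Hw Ht; simpl.
  - destruct (Rle_dec t (fst p)) as [h|h].
    + exfalso. assert (fst p < t) by (apply Hw; simpl; auto). lra.
    + destruct (Rle_dec t (fst q)) as [h2|h2]; [reflexivity| lra].
  - destruct (Rle_dec t (fst w)) as [h|h].
    + exfalso. assert (fst w < t) by (apply Hw; simpl; auto). lra.
    + apply IH; auto. intros z Hz; apply Hw; simpl; auto.
Qed.

Lemma interp_open l1 p q l2 t : incrL (l1 ++ p :: q :: l2) -> fst p < t <= fst q ->
  Defs.interp (l1 ++ p :: q :: l2) t = lin p q t.
Proof.
  intros Hi Ht. destruct l1 as [|z l1']; simpl.
  - destruct (Rle_dec t (fst q)) as [h|h]; [reflexivity|lra].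
  - replace (l1' ++ p :: q :: l2) with ((l1' ++ []) ++ p :: q :: l2) by (rewrite app_nil_r; auto).
    apply interp_aux_mid; [|lra].
    intros w Hw. apply in_app_or in Hw. destruct Hw as [Hw|Hw].
    + rewrite app_nil_r in Hw. apply in_split in Hw. destruct Hw as [la [lb Hab]].
      assert (fst w < fst p).
      { apply (incrL_lt _ (z :: la) w lb p (q :: l2) Hi). subst. simpl. rewrite <- app_assoc. reflexivity. }
      lra.
    + destruct Hw as [<-|[]]; lra.
Qed.

Lemma interp_closed l1 p q l2 t : incrL (l1 ++ p :: q :: l2) -> fst p <= t <= fst q ->
  Defs.interp (l1 ++ p :: q :: l2) t = lin p q t.
Proof.
  intros Hi Ht. destruct (Req_dec t (fst p)) as [E|E]; [|apply interp_open; auto; lra].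
  subst t. assert (Hpq : fst p < fst q).
  { apply (incrL_lt _ l1 p [] q l2 Hi). reflexivity. }
  destruct (last_or_nil l1) as [->|[l0 [o ->]]].
  - simpl. destruct (Rle_dec (fst p) (fst q)); [reflexivity|lra].
  - assert (Hop : fst o < fst p).
    { apply (incrL_lt _ l0 o [] p (q::l2) Hi). rewrite <- app_assoc. reflexivity. }
    rewrite <- app_assoc. simpl. rewrite interp_open.
    + unfold lin. field. lra.
    + rewrite <- app_assoc in Hi. exact Hi.
    + lra.
Qed.
Definition pc1 (p q : R*R) := (fst p + (fst q - fst p)/3, snd p + slope p q * ((fst q - fst p)/3)).
Definition pc2 (lam : R) (p q : R*R) := (fst p + (fst q - fst p)/2,
   (snd p + slope p q * ((fst q - fst p)/2)) + lam * (fst q - fst p) * sqrt (1 + slope p q ^ 2)).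
Definition pc3 (p q : R*R) := (fst p + 2 * (fst q - fst p)/3, snd p + slope p q * (2 * (fst q - fst p)/3)).

Lemma pieces_eq lam p q : pieces lam p q = [p; pc1 p q; pc2 lam p q; pc3 p q].
Proof. destruct p, q; reflexivity. Qed.

Lemma refine_cons lam p q rest : refine_aux lam p (q :: rest) =
  p :: pc1 p q :: pc2 lam p q :: pc3 p q :: refine_aux lam q rest.
Proof. change (pieces lam p q ++ refine_aux lam q rest = p :: pc1 p q :: pc2 lam p q :: pc3 p q :: refine_aux lam q rest). rewrite pieces_eq. reflexivity. Qed.

Lemma refine_head lam q l : exists Y, refine_aux lam q l = q :: Y.
Proof. destruct l; [exists []; reflexivity|rewrite refine_cons; eauto]. Qed.

Lemma refine_last lam rest p z : exists t, refine_aux lam p (rest ++ [z]) = t ++ [z].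
Proof.
  revert p; induction rest as [|r rest IH]; intros p.
  - simpl. exists (pieces lam p z). reflexivity.
  - simpl app. rewrite refine_cons. destruct (IH r) as [t Ht]. rewrite Ht.
    exists (p :: pc1 p r :: pc2 lam p r :: pc3 p r :: t). reflexivity.
Qed.

Section S.
Variable lam : R.
Hypothesis Hlam : 1/6 < lam.

Lemma sq_pos S : 0 < sqrt (1 + S^2).
Proof. apply sqrt_lt_R0. nra. Qed.

Lemma bump_pos S : S + 6 * lam * sqrt (1 + S^2) > 0.
Proof.
  pose proof (sq_pos S) as H. pose proof (sqrt_sqrt (1 + S^2)) as H2.
  assert (0 <= 1 + S^2) by nra. specialize (H2 H0).
  set (r := sqrt (1+S^2)) in *.
  assert (S + r > 0).
  { destruct (Rle_dec 0 S); [lra|]. assert ((r + S) * (r - S) > 0) by nra. 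
    assert (r - S > 0) by lra. destruct (Rle_dec (r + S) 0); [|lra].
    assert ((r + S) * (r - S) <= 0) by (apply Rmult_le_0_r; lra). lra. }
  assert (6 * lam * r > r) by nra. lra.
Qed.

Lemma bump_neg S : S - 6 * lam * sqrt (1 + S^2) < 0.
Proof.
  pose proof (sq_pos S) as H. pose proof (sqrt_sqrt (1 + S^2)) as H2.
  assert (0 <= 1 + S^2) by nra. specialize (H2 H0).
  set (r := sqrt (1+S^2)) in *.
  assert (r - S > 0).
  { destruct (Rle_dec S 0); [lra|]. assert ((r + S) * (r - S) > 0) by nra. 
    assert (r + S > 0) by lra. destruct (Rle_dec (r - S) 0); [|lra].
    assert ((r - S) * (r + S) <= 0) by (apply Rmult_le_0_r; lra). lra. }
  assert (6 * lam * r > r) by nra. lra.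
Qed.

Lemma sl1 p q : fst p < fst q -> slope p (pc1 p q) = slope p q.
Proof. intros. unfold pc1, slope; simpl. field. lra. Qed.
Lemma sl2 p q : fst p < fst q -> slope (pc1 p q) (pc2 lam p q) = slope p q + 6 * lam * sqrt (1 + slope p q ^ 2).
Proof. intros. unfold pc1, pc2. set (S := slope p q). unfold slope at 1; simpl. field. lra. Qed.
Lemma sl3 p q : fst p < fst q -> slope (pc2 lam p q) (pc3 p q) = slope p q - 6 * lam * sqrt (1 + slope p q ^ 2).
Proof. intros. unfold pc3, pc2. set (S := slope p q). unfold slope at 1; simpl. field. lra. Qed.
Lemma sl4 p q : fst p < fst q -> slope (pc3 p q) q = slope p q.
Proof. intros. unfold pc3, slope; simpl. field. lra. Qed.

Lemma refine_good rest : forall p q, incrL (p::q::rest) -> kinksL (p::q::rest) ->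
  incrL (refine_aux lam p (q::rest)) /\ kinksL (refine_aux lam p (q::rest)).
Proof.
  induction rest as [|r rest IH]; intros p q Hi Hk.
  - assert (Hpq : fst p < fst q) by (simpl in Hi; tauto).
    rewrite refine_cons. simpl refine_aux.
    pose proof (sq_pos (slope p q)). pose proof (bump_pos (slope p q)).
    split.
    + unfold pc1, pc2, pc3.
      repeat apply incrL_intro; simpl; try lra. auto.
    + apply kinksL_intro; [rewrite sl1, sl2 by lra; nra|].
      apply kinksL_intro; [rewrite sl2, sl3 by lra; nra|].
      apply kinksL_intro; [rewrite sl3, sl4 by lra; nra|].
      simpl; auto.
  - assert (Hpq : fst p < fst q) by (simpl in Hi; tauto).
    assert (Hqr : fst q < fst r) by (simpl in Hi; tauto).
    assert (Hk1 : slope p q <> slope q r) by (simpl in Hk; tauto).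
    destruct (IH q r) as [I1 I2]; [simpl in *; tauto|simpl in *; tauto|].
    rewrite refine_cons. rewrite refine_cons in I1, I2 |- *.
    pose proof (sq_pos (slope p q)). pose proof (bump_pos (slope p q)).
    split.
    + repeat apply incrL_intro; unfold pc1, pc2, pc3; simpl; try lra. simpl in I1; tauto.
    + apply kinksL_intro; [rewrite sl1, sl2 by lra; nra|].
      apply kinksL_intro; [rewrite sl2, sl3 by lra; nra|].
      apply kinksL_intro; [rewrite sl3, sl4 by lra; nra|].
      apply kinksL_intro; [rewrite sl4, sl1 by lra; auto|]. exact I2.
Qed.

Lemma global_inv n : exists M, breakpoints lam n = (0,0) :: M ++ [(1,0)] /\
  incrL (breakpoints lam n) /\ kinksL (breakpoints lam n).
Proof.
  induction n as [|n IH].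
  - exists []. simpl. repeat split; auto; lra.
  - destruct IH as [M [HM [Hi Hk]]]. simpl breakpoints. rewrite HM in *.
    unfold refine.
    destruct (refine_last lam M (0,0) (1,0)) as [t Ht].
    assert (Hg : incrL (refine_aux lam (0,0) (M ++ [(1,0)])) /\ kinksL (refine_aux lam (0,0) (M ++ [(1,0)]))).
    { destruct M as [|q M']; simpl app; apply refine_good; auto. }
    destruct (refine_head lam (0,0) (M ++ [(1,0)])) as [Y HY].
    destruct t as [|w t'].
    + exfalso. rewrite Ht in HY. simpl in HY. injection HY; intros. lra.
    + exists t'. rewrite Ht in HY |- *. simpl in HY. injection HY as -> _. split; [reflexivity|].
      rewrite <- Ht. exact Hg.
Qed.

Lemma refine_aux_split l1 : forall p0 p q l2, exists X, refine_aux lam p0 (l1 ++ p :: q :: l2) =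
  X ++ p :: pc1 p q :: pc2 lam p q :: pc3 p q :: refine_aux lam q l2.
Proof.
  induction l1 as [|w l1 IH]; intros p0 p q l2; simpl app.
  - rewrite refine_cons, refine_cons. exists [p0; pc1 p0 p; pc2 lam p0 p; pc3 p0 p]. reflexivity.
  - rewrite refine_cons. destruct (IH w p q l2) as [X HX]. rewrite HX.
    exists (p0 :: pc1 p0 w :: pc2 lam p0 w :: pc3 p0 w :: X). reflexivity.
Qed.

Lemma refine_pair l1 p q l2 : exists X Y, refine lam (l1 ++ p :: q :: l2) =
  X ++ p :: pc1 p q :: pc2 lam p q :: pc3 p q :: q :: Y.
Proof.
  destruct (refine_head lam q l2) as [Y HY].
  destruct l1 as [|z l1]; cbn [app refine].
  - rewrite refine_cons, HY. exists [], Y. reflexivity.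
  - destruct (refine_aux_split l1 z p q l2) as [X HX]. rewrite HX, HY. eauto.
Qed.

End S.

Lemma digit y :
  (y < 1/3 /\ U y = 0%nat /\ Ut y = 0 /\ T y = 3 * y) \/
  (1/3 <= y < 1/2 /\ U y = 1%nat /\ Ut y = 1/3 /\ T y = 6 * y - 2) \/
  (1/2 <= y < 2/3 /\ U y = 2%nat /\ Ut y = 2/3 /\ T y = 4 - 6 * y) \/
  (2/3 <= y /\ U y = 3%nat /\ Ut y = 2/3 /\ T y = 3 * y - 2).
Proof.
  unfold U, Ut, T.
  destruct (Rlt_dec y (1/3)); [left; repeat split; auto|].
  destruct (Rlt_dec y (1/2)); [right; left; repeat split; auto; lra|].
  destruct (Rlt_dec y (2/3)); [right; right; left; repeat split; auto; lra|].
  right; right; right; repeat split; auto; lra.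
Qed.

Lemma beta_S i x n : beta i x (S n) = (beta i x n + if Nat.eqb (U (Titer n x)) i then 1 else 0)%nat.
Proof. reflexivity. Qed.

Lemma eps_S x n : eps x (S n) = eps x n * (if Nat.eqb (U (Titer n x)) 2 then -1 else 1).
Proof. unfold eps. rewrite beta_S, pow_add. destruct (Nat.eqb _ 2); simpl; ring. Qed.

Lemma ell_S x n : let k i := (if Nat.eqb (U (Titer n x)) i then 1 else 0)%nat in
  ell x (S n) = ell x n * / (3 ^ (k 0%nat + k 3%nat) * 6 ^ (k 1%nat + k 2%nat)).
Proof.
  intros k. unfold ell, beta2. rewrite !beta_S. fold (k 0%nat) (k 1%nat) (k 2%nat) (k 3%nat).
  replace (beta 0 x n + k 0%nat + (beta 3 x n + k 3%nat))%nat with ((beta 0 x n + beta 3 x n) + (k 0%nat + k 3%nat))%nat by lia.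
  replace (beta 1 x n + k 1%nat + (beta 2 x n + k 2%nat))%nat with ((beta 1 x n + beta 2 x n) + (k 1%nat + k 2%nat))%nat by lia.
  rewrite !pow_add.
  assert (forall j, 3 ^ j <> 0) by (intros; apply pow_nonzero; lra).
  assert (forall j, 6 ^ j <> 0) by (intros; apply pow_nonzero; lra).
  field. repeat split; auto.
Qed.

Lemma b12_S x n : beta2 1 2 x (S n) = (beta2 1 2 x n + (if Nat.eqb (U (Titer n x)) 1 then 1 else 0) + (if Nat.eqb (U (Titer n x)) 2 then 1 else 0))%nat.
Proof. unfold beta2. rewrite !beta_S. lia. Qed.

Lemma step x n : let y := Titer n x in
 (y < 1/3 /\ Titer (S n) x = 3*y /\ a x (S n) = a x n /\ eps x (S n) = eps x n /\
    ell x (S n) = ell x n / 3 /\ beta2 1 2 x (S n) = beta2 1 2 x n)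
 \/ (1/3 <= y < 1/2 /\ Titer (S n) x = 6*y-2 /\ a x (S n) = a x n + eps x n * ell x n / 3 /\
    eps x (S n) = eps x n /\ ell x (S n) = ell x n / 6 /\ beta2 1 2 x (S n) = S (beta2 1 2 x n))
 \/ (1/2 <= y < 2/3 /\ Titer (S n) x = 4 - 6*y /\ a x (S n) = a x n + 2 * eps x n * ell x n / 3 /\
    eps x (S n) = - eps x n /\ ell x (S n) = ell x n / 6 /\ beta2 1 2 x (S n) = S (beta2 1 2 x n))
 \/ (2/3 <= y /\ Titer (S n) x = 3*y-2 /\ a x (S n) = a x n + 2 * eps x n * ell x n / 3 /\
    eps x (S n) = eps x n /\ ell x (S n) = ell x n / 3 /\ beta2 1 2 x (S n) = beta2 1 2 x n).
Proof.
  intros y. rewrite eps_S, ell_S, b12_S.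
  assert (Ha : a x (S n) = a x n + Ut y * eps x n * ell x n) by reflexivity.
  assert (Ht : Titer (S n) x = T y) by reflexivity.
  rewrite Ha, Ht. fold y.
  destruct (digit y) as [(H1&H2&H3&H4)|[(H1&H2&H3&H4)|[(H1&H2&H3&H4)|(H1&H2&H3&H4)]]];
  rewrite H2, H3, H4; simpl.
  - left. repeat split; auto; try field; try lra; lia.
  - right; left. repeat split; auto; try field; try lra; lia.
  - right; right; left. repeat split; auto; try field; try lra; lia.
  - right; right; right. repeat split; auto; try field; try lra; lia.
Qed.

Lemma eps_pm x n : eps x n = 1 \/ eps x n = -1.
Proof.
  unfold eps. induction (beta 2 x n) as [|k IH]; simpl; [auto|].
  destruct IH as [-> | ->]; [right|left]; ring.
Qed.

Lemma ell_pos x n : 0 < ell x n.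
Proof. unfold ell. apply Rinv_0_lt_compat. apply Rmult_lt_0_compat; apply pow_lt; lra. Qed.

Lemma Ilh_pos x n : eps x n = 1 -> I_lo x n = a x n /\ I_hi x n = a x n + ell x n.
Proof.
  intros E. pose proof (ell_pos x n). unfold I_lo, I_hi. rewrite E.
  unfold Rmin, Rmax. destruct (Rle_dec _ _); split; lra.
Qed.

Lemma Ilh_neg x n : eps x n = -1 -> I_lo x n = a x n - ell x n /\ I_hi x n = a x n.
Proof.
  intros E. pose proof (ell_pos x n). unfold I_lo, I_hi. rewrite E.
  unfold Rmin, Rmax. destruct (Rle_dec _ _); split; lra.
Qed.

Lemma xrel x n : 0 <= x <= 1 -> 0 <= Titer n x <= 1 /\ x = a x n + eps x n * ell x n * Titer n x.
Proof.
  intros Hx. induction n as [|n IH].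
  - simpl. unfold eps, ell, beta2. simpl. split; [lra|field].
  - destruct IH as [Hb Hr].
    destruct (step x n) as [(H1&H2&H3&H4&H5&_)|[(H1&H2&H3&H4&H5&_)|[(H1&H2&H3&H4&H5&_)|(H1&H2&H3&H4&H5&_)]]];
    rewrite H2, H3, H4, H5; (split; [lra|]); rewrite Hr at 1; field.
Qed.


Lemma T0 : T 0 = 0.
Proof. unfold T. destruct (Rlt_dec 0 (1/3)); [ring|lra]. Qed.
Lemma T1 : T 1 = 1.
Proof. unfold T. destruct (Rlt_dec 1 (1/3)); [lra|]. destruct (Rlt_dec 1 (1/2)); [lra|].
  destruct (Rlt_dec 1 (2/3)); [lra|ring]. Qed.
Lemma U0 : U 0 = 0%nat.
Proof. unfold U. destruct (Rlt_dec 0 (1/3)); [auto|lra]. Qed.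
Lemma U1 : U 1 = 3%nat.
Proof. unfold U. destruct (Rlt_dec 1 (1/3)); [lra|]. destruct (Rlt_dec 1 (1/2)); [lra|].
  destruct (Rlt_dec 1 (2/3)); [lra|auto]. Qed.

Lemma Titer_fix x n c : T c = c -> Titer n x = c -> forall j, Titer (j + n) x = c.
Proof. intros Hc H j; induction j as [|j IH]; simpl; [auto|]. rewrite IH; auto. Qed.

Lemma strict x n : 0 <= x <= 1 -> ~ inE x -> 0 < Titer n x < 1.
Proof.
  intros Hx HE. destruct (xrel x n Hx) as [Hb _].
  split.
  - destruct (Req_dec (Titer n x) 0) as [E|E]; [|lra]. exfalso. apply HE. exists n. left.
    intros k Hk. unfold u. replace k with ((k - n) + n)%nat by lia.
    rewrite (Titer_fix x n 0 T0 E). apply U0.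
  - destruct (Req_dec (Titer n x) 1) as [E|E]; [|lra]. exfalso. apply HE. exists n. right.
    intros k Hk. unfold u. replace k with ((k - n) + n)%nat by lia.
    rewrite (Titer_fix x n 1 T1 E). apply U1.
Qed.

Definition Inv lam x n := exists l1 p q l2, breakpoints lam n = l1 ++ p :: q :: l2 /\
  fst p = I_lo x n /\ fst q = I_hi x n /\
  ((beta2 1 2 x n = 0%nat /\ slope p q = 0) \/ (beta2 1 2 x n <> 0%nat /\ slope p q * eps x n > 0)).

Lemma Inv_all lam x : 1/6 < lam -> forall n, Inv lam x n.
Proof.
  intros Hlam n. induction n as [|n IH].
  - exists [], (0,0), (1,0), []. unfold I_lo, I_hi, Rmin, Rmax, eps, ell, beta2, slope. simpl.
    destruct (Rle_dec _ _); [|lra]. repeat split; try lra. left. split; [reflexivity|field].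
  - destruct IH as [l1 [p [q [l2 [HL [Hp [Hq Hs]]]]]]].
    destruct (refine_pair lam l1 p q l2) as [X [Y HXY]].
    assert (HB : breakpoints lam (S n) = X ++ p :: pc1 p q :: pc2 lam p q :: pc3 p q :: q :: Y).
    { simpl. rewrite HL. exact HXY. }
    pose proof (ell_pos x n) as Hl. pose proof (sq_pos (slope p q)) as Hsq.
    pose proof (bump_pos lam Hlam (slope p q)) as Hbp. pose proof (bump_neg lam Hlam (slope p q)) as Hbn.
    destruct (eps_pm x n) as [E|E];
    [destruct (Ilh_pos x n E) as [Hlo Hhi] | destruct (Ilh_neg x n E) as [Hlo Hhi]];
    (assert (Hpq : fst p < fst q) by lra);
    (destruct (step x n) as [(_&_&H3&H4&H5&H6)|[(_&_&H3&H4&H5&H6)|[(_&_&H3&H4&H5&H6)|(_&_&H3&H4&H5&H6)]]]);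
    try rewrite E in H3; rewrite E in H4;
    [ destruct (Ilh_pos x (S n) H4) as [Hlo' Hhi']; exists X, p, (pc1 p q), (pc2 lam p q :: pc3 p q :: q :: Y)
    | destruct (Ilh_pos x (S n) H4) as [Hlo' Hhi']; exists (X ++ [p]), (pc1 p q), (pc2 lam p q), (pc3 p q :: q :: Y)
    | assert (H4' : eps x (S n) = -1) by lra; destruct (Ilh_neg x (S n) H4') as [Hlo' Hhi'];
      exists (X ++ [p; pc1 p q]), (pc2 lam p q), (pc3 p q), (q :: Y)
    | destruct (Ilh_pos x (S n) H4) as [Hlo' Hhi']; exists (X ++ [p; pc1 p q; pc2 lam p q]), (pc3 p q), q, Y
    | destruct (Ilh_neg x (S n) H4) as [Hlo' Hhi']; exists (X ++ [p; pc1 p q; pc2 lam p q]), (pc3 p q), q, Y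
    | destruct (Ilh_neg x (S n) H4) as [Hlo' Hhi']; exists (X ++ [p; pc1 p q]), (pc2 lam p q), (pc3 p q), (q :: Y)
    | assert (H4' : eps x (S n) = 1) by lra; destruct (Ilh_pos x (S n) H4') as [Hlo' Hhi'];
      exists (X ++ [p]), (pc1 p q), (pc2 lam p q), (pc3 p q :: q :: Y)
    | destruct (Ilh_neg x (S n) H4) as [Hlo' Hhi']; exists X, p, (pc1 p q), (pc2 lam p q :: pc3 p q :: q :: Y) ];
    (split; [rewrite HB; rewrite <- ?app_assoc; reflexivity|]);
    unfold pc1, pc2, pc3; simpl fst;
    (split; [lra|]); (split; [lra|]); fold (pc1 p q) (pc2 lam p q) (pc3 p q);
    rewrite ?sl1, ?sl2, ?sl3, ?sl4, H6 by lra;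
    try (rewrite H4); try (rewrite H4');
    try (destruct Hs as [[Hs1 Hs2]|[Hs1 Hs2]]; [left|right]; rewrite ?E in Hs2; split; auto; lra);
    right; split; auto; lra.
Qed.

Lemma slope_from al be r s t1 t2 : fst r < fst s -> t1 <> t2 ->
  al * t1 + be = lin r s t1 -> al * t2 + be = lin r s t2 -> al = slope r s.
Proof.
  intros Hrs Ht H1 H2. unfold lin in *. fold (slope r s) in H1, H2.
  set (S := slope r s) in *.
  assert (E : (al - S) * (t1 - t2) = 0) by (ring_simplify; lra).
  apply Rmult_integral in E. destruct E; lra.
Qed.

Lemma sgn_pos y : 0 < y -> sgn y = 1.
Proof. intros; unfold sgn; destruct (Rlt_dec 0 y); [auto|lra]. Qed.
Lemma sgn_neg y : y < 0 -> sgn y = -1.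
Proof. intros; unfold sgn; destruct (Rlt_dec 0 y); [lra|]. destruct (Rlt_dec y 0); [auto|lra]. Qed.
Lemma sgn_0 : sgn 0 = 0.
Proof. unfold sgn; destruct (Rlt_dec 0 0); [lra|]. destruct (Rlt_dec 0 0); [lra|auto]. Qed.

Theorem lemma3p2 (lam x : R) :
  1/6 < lam < 5/6 -> 0 <= x <= 1 -> ~ inE x ->
  forall n : nat,
    (0 <= I_lo x n /\ I_lo x n < x < I_hi x n /\ I_hi x n <= 1 /\
     AffineOn (F lam n) (I_lo x n) (I_hi x n) /\
     (forall c d, 0 <= c -> d <= 1 -> c < x < d -> AffineOn (F lam n) c d ->
        d - c <= I_hi x n - I_lo x n /\ I_lo x n <= c /\ d <= I_hi x n)) /\
    ex_derive (F lam n) x /\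
    m lam n x = (F lam n x - F lam n (a x n)) / (x - a x n) /\
    sgn (m lam n x) = sgn (INR (beta2 1 2 x n)) * eps x n.
Proof.
  intros Hlam Hx HE n.
  destruct (global_inv lam (proj1 Hlam) n) as [M [HM [Hi Hk]]].
  destruct (Inv_all lam x (proj1 Hlam) n) as [l1 [p [q [l2 [HL [Hp [Hq Hs]]]]]]].
  pose proof (strict x n Hx HE) as Hy. destruct (xrel x n Hx) as [_ Hr].
  pose proof (ell_pos x n) as Hl.
  set (y := Titer n x) in *.
  assert (Hly : 0 < ell x n * y < ell x n) by (split; nra).
  assert (Hin : I_lo x n < x < I_hi x n /\ (a x n = fst p \/ a x n = fst q)).
  { destruct (eps_pm x n) as [E|E];
    [destruct (Ilh_pos x n E) as [Hlo Hhi] | destruct (Ilh_neg x n E) as [Hlo Hhi]];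
    rewrite E in Hr; (split; [lra|]); [left|right]; lra. }
  destruct Hin as [Hin Ha].
  rewrite HL in Hi, Hk.
  assert (Hpq : fst p < fst q) by lra.
  assert (HF : forall t, fst p <= t <= fst q -> F lam n t = lin p q t).
  { intros t Ht. unfold F. rewrite HL. apply interp_closed; auto. }
  assert (Hlo0 : 0 <= fst p).
  { destruct l1 as [|z l1'].
    - rewrite HM in HL. simpl in HL. injection HL as <- _. simpl; lra.
    - rewrite HM in HL. simpl in HL. injection HL as <- _.
      assert (fst (0,0) < fst p) by (apply (incrL_lt _ [] (0,0) l1' p (q :: l2) Hi); reflexivity).
      simpl in H; lra. }
  assert (Hhi1 : fst q <= 1).
  { rewrite HM in HL. destruct (last_or_nil l2) as [->|[l2' [z ->]]].
    - replace (l1 ++ [p; q]) with ((l1 ++ [p]) ++ [q]) in HL by (rewrite <- app_assoc; reflexivity).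
      rewrite app_comm_cons in HL. apply app_inj_tail in HL. destruct HL as [_ <-]. simpl; lra.
    - replace (l1 ++ p :: q :: l2' ++ [z]) with ((l1 ++ p :: q :: l2') ++ [z]) in HL by (rewrite <- app_assoc; reflexivity).
      rewrite app_comm_cons in HL. apply app_inj_tail in HL. destruct HL as [_ <-].
      assert (fst q < fst (1,0)).
      { apply (incrL_lt _ (l1 ++ [p]) q l2' (1,0) [] Hi). rewrite <- app_assoc. reflexivity. }
      simpl in H; lra. }
  assert (Hder : is_derive (F lam n) x (slope p q)).
  { apply (is_derive_ext_loc (fun t => slope p q * t + (snd p - slope p q * fst p))).
    - assert (Ho : open (fun t => fst p < t /\ t < fst q)) by (apply open_and; [apply open_gt|apply open_lt]).
      apply (filter_imp (fun t => fst p < t /\ t < fst q)).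
      + intros t Ht. simpl. rewrite HF by lra. unfold lin, slope. ring.
      + apply Ho. lra.
    - auto_derive; [auto|ring]. }
  split; [|split; [|split]].
  - split; [lra|]. split; [lra|]. split; [lra|]. split.
    + exists (slope p q), (snd p - slope p q * fst p). intros t Ht.
      rewrite HF by lra. unfold lin, slope. ring.
    + intros c d Hc Hd Hcxd [al [be Hab]].
      assert (C1 : fst p <= c).
      { destruct (Rle_dec (fst p) c) as [h|h]; [auto|exfalso].
        destruct (last_or_nil l1) as [->|[l0 [o ->]]].
        - rewrite HM in HL. simpl in HL. injection HL as <- _. simpl in h; lra.
        - rewrite <- app_assoc in Hi, Hk. simpl in Hi, Hk.
          pose proof (kinks_get l0 o p q l2 Hk) as Hkink.
          assert (Hop : fst o < fst p) by (apply (incrL_lt _ l0 o [] p (q :: l2) Hi); reflexivity).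
          assert (HF2 : forall t, fst o <= t <= fst p -> F lam n t = lin o p t).
          { intros t Ht. unfold F. rewrite HL, <- app_assoc. apply interp_closed; auto. }
          set (c' := Rmax c (fst o)).
          assert (c <= c' /\ fst o <= c') by (split; [apply Rmax_l|apply Rmax_r]).
          assert (c' < fst p) by (apply Rmax_lub_lt; lra).
          assert (al = slope o p).
          { apply (slope_from al be o p (fst p) ((c' + fst p)/2)); try lra.
            - rewrite <- HF2 by lra. symmetry; apply Hab; lra.
            - rewrite <- HF2 by lra. symmetry; apply Hab; lra. }
          assert (al = slope p q).
          { apply (slope_from al be p q x ((fst p + x)/2)); try lra.
            - rewrite <- HF by lra. symmetry; apply Hab; lra.
            - rewrite <- HF by lra. symmetry; apply Hab; lra. }
          apply Hkink; congruence. }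
      assert (C2 : d <= fst q).
      { destruct (Rle_dec d (fst q)) as [h|h]; [auto|exfalso].
        destruct l2 as [|r l2'].
        - rewrite HM in HL.
          replace (l1 ++ [p; q]) with ((l1 ++ [p]) ++ [q]) in HL by (rewrite <- app_assoc; reflexivity).
          rewrite app_comm_cons in HL. apply app_inj_tail in HL. destruct HL as [_ <-]. simpl in h; lra.
        - pose proof (kinks_get l1 p q r l2' Hk) as Hkink.
          assert (Hqr : fst q < fst r) by (apply (incrL_lt _ (l1 ++ [p]) q [] r l2' Hi); rewrite <- app_assoc; reflexivity).
          assert (HF2 : forall t, fst q <= t <= fst r -> F lam n t = lin q r t).
          { intros t Ht. unfold F. rewrite HL.
            replace (l1 ++ p :: q :: r :: l2') with ((l1 ++ [p]) ++ q :: r :: l2') by (rewrite <- app_assoc; reflexivity).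
            apply interp_closed; auto. rewrite <- app_assoc. exact Hi. }
          set (d' := Rmin d (fst r)).
          assert (d' <= d /\ d' <= fst r) by (split; [apply Rmin_l|apply Rmin_r]).
          assert (fst q < d') by (apply Rmin_glb_lt; lra).
          assert (al = slope q r).
          { apply (slope_from al be q r (fst q) ((d' + fst q)/2)); try lra.
            - rewrite <- HF2 by lra. symmetry; apply Hab; lra.
            - rewrite <- HF2 by lra. symmetry; apply Hab; lra. }
          assert (al = slope p q).
          { apply (slope_from al be p q x ((fst q + x)/2)); try lra.
            - rewrite <- HF by lra. symmetry; apply Hab; lra.
            - rewrite <- HF by lra. symmetry; apply Hab; lra. }
          apply Hkink; congruence. }
      split; lra.
  - exists (slope p q). exact Hder.
  - unfold m. rewrite (is_derive_unique _ _ _ Hder).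
    rewrite (HF x) by lra.
    assert (Ha2 : fst p <= a x n <= fst q). { destruct Ha as [Ha|Ha]. - rewrite Ha. lra. - rewrite Ha. lra. }
    rewrite (HF (a x n) Ha2).
    unfold lin, slope. field. split; [lra|]. destruct Ha as [Ha|Ha]; rewrite Ha; lra.
  - unfold m. rewrite (is_derive_unique _ _ _ Hder).
    destruct Hs as [[Hb Hsl]|[Hb Hsl]].
    + rewrite Hb, Hsl. simpl INR. rewrite sgn_0. ring.
    + rewrite (sgn_pos (INR _)) by (apply lt_0_INR; lia).
      destruct (eps_pm x n) as [E|E]; rewrite E in *.
      * rewrite sgn_pos by lra. ring.
      * rewrite sgn_neg by lra. ring.
Qed.
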